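(* Let $d\ge 2$ and let $n_k$ denote the number of vertices of $L^k(SF(d,4))$, where $SF(d,4)$ is the square-free digraph; equivalently, $n_k$ is the number of words of length $k+4$ over the alphabet $\{0,1,\dots,d\}$ having no two equal consecutive letters and no factor of the form $abab$ (with letters $a\neq b$). Then $n_0=d^4+d^3-d^2-d$, $n_1=d^5+d^4-2d^3-d^2+d$, and $$n_k=(d-1)\,n_{k-1}+(d-1)\,n_{k-2}\qquad\text{for all } k\ge 2.$$
   Context: The square-free digraph $SF(d,4)$ has as vertices the words $a_1a_2a_3a_4$ over $\{0,1,\dots,d\}$ with $a_i\ne a_{i+1}$ for $i=1,2,3$ and not of the form $abab$ (i.e., not $a_1=a_3$ and $a_2=a_4$); there is an arc from $a_1a_2a_3a_4$ to $a_2a_3a_4a_5$ whenever $a_5\ne a_4$ and, if $a_2=a_4$, then $a_5\ne a_3$. The line digraph $LG$ has as vertex set the set of arcs of $G$, with an arc from $e$ to $f$ whenever the head of $e$ equals the tail of $f$; $L^0G=G$, $L^kG=L(L^{k-1}G)$. *)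

(* Defs.v *)
From mathcomp Require Import all_boot all_order all_algebra.
Set Implicit Arguments. Unset Strict Implicit. Unset Printing Implicit Defensive.

Record digraph := Digraph { dvert : finType; darc : rel dvert }.

Definition line_vert (G : digraph) : finType :=
  {p : dvert G * dvert G | darc p.1 p.2}.
Definition line_arc (G : digraph) : rel (line_vert G) :=
  fun e f => (val e).2 == (val f).1.
Definition line_digraph (G : digraph) : digraph :=
  @Digraph (line_vert G) (@line_arc G).

Definition iter_line (k : nat) (G : digraph) : digraph := iter k line_digraph G.

Definition sf_word (d : nat) (s : seq 'I_d.+1) : bool :=
  let x i := nth ord0 s i in
  all (fun i => x i != x i.+1) (iota 0 (size s).-1) &&
  all (fun i => ~~ ((x i == x i.+2) && (x i.+1 == x i.+3))) (iota 0 (size s - 3)).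

Definition SF_vert (d : nat) : finType := {w : 4.-tuple 'I_d.+1 | sf_word w}.

(* Arcs of SF(d,4): a1a2a3a4 -> a2a3a4a5 when a5 != a4 and (a2 = a4 -> a5 != a3). *)
Definition SF_arc (d : nat) : rel (SF_vert d) :=
  fun u v =>
    let a i := tnth (val u) i in
    let b i := tnth (val v) i in
    [&& b ord0 == a (inord 1), b (inord 1) == a (inord 2), b (inord 2) == a (inord 3),
        b (inord 3) != a (inord 3)
      & (a (inord 1) == a (inord 3)) ==> (b (inord 3) != a (inord 2))].

Definition SF (d : nat) : digraph := @Digraph (SF_vert d) (@SF_arc d).

Definition nk (d k : nat) : nat := #|dvert (iter_line k (SF d))|.

Definition nwords (d m : nat) : nat := #|[set t : m.-tuple 'I_d.+1 | sf_word t]|.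

(* Main.v *)
Require Import Defs.
From mathcomp Require Import all_boot all_order all_algebra.
From mathcomp Require Import zify.
Set Implicit Arguments. Unset Strict Implicit. Unset Printing Implicit Defensive.
Open Scope nat_scope.

Lemma sum_sig (T : finType) (P Q : pred T) (F : T -> nat) :
  \sum_(x : {x : T | P x} | Q (val x)) F (val x) = \sum_(i | P i && Q i) F i.
Proof.
rewrite (reindex_omap (val : {x | P x} -> T) insub); last first.
  by move=> i /andP[iA Pi]; rewrite insubT.
apply: eq_bigl=> -[i iA]/=; by rewrite insubT ?iA /= eqxx andbT.
Qed.

Lemma sum_tupleS (T : finType) n (f : seq T -> nat) :
  \sum_(t : n.+1.-tuple T) f t = \sum_(x : T) \sum_(t : n.-tuple T) f (x :: t).
Proof.
rewrite pair_big /=.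
rewrite (reindex (fun p : T * n.-tuple T => [tuple of p.1 :: p.2])) //=.
exists (fun t : n.+1.-tuple T => (thead t, [tuple of behead t])).
  by move=> [x t] _ /=; congr pair; apply: val_inj.
by move=> t _; apply: val_inj => /=; case: t => [[|x s] //].
Qed.

Lemma sum_tuple0 (T : finType) (f : seq T -> nat) :
  \sum_(t : 0.-tuple T) f t = f [::].
Proof. rewrite (big_pred1 [tuple]) // => t; apply/esym/eqP; exact: tuple0. Qed.

Lemma sum_b2n (T : finType) (P : pred T) : \sum_x (P x : nat) = #|P|.
Proof. rewrite -sum1_card [RHS]big_mkcond; apply: eq_bigr => x _; rewrite unfold_in; by case: (P x). Qed.

Definition hc (d : nat) (a : 'I_d.+1) (s : seq 'I_d.+1) : bool :=
  match s with
  | [::] => true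
  | b :: s1 => (a != b) && match s1 with c :: e :: _ => ~~((a == c) && (b == e)) | _ => true end
  end.

Lemma all_iotaS (p : pred nat) n :
  all p (iota 0 n.+1) = p 0 && all (fun i => p i.+1) (iota 0 n).
Proof. by rewrite /= (iotaDl 1 0) all_map. Qed.

Lemma sf_cons d (a : 'I_d.+1) s : sf_word (a :: s) = hc a s && sf_word s.
Proof.
case: s => [|b [|c [|e s]]]; rewrite /sf_word /= ?andbT //.
rewrite !subSS subn0 (iotaDl 1 2) (iotaDl 1 0) !all_map.
case: (a != b); case: (b != c); case: (c != e) => //=. all: case: (~~ _) => //=; by rewrite andbF. Qed.

Fixpoint out (G : digraph) (k : nat) (v : dvert G) : nat :=
  if k is k'.+1 then \sum_(w | darc v w) out k' w else 1.

Lemma out_line G k (e : dvert (line_digraph G)) :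
  out k e = out k (val e).2.
Proof.
elim: k e => [|k IH] e //=.
rewrite (eq_bigr (fun f : line_vert G => out k (val f).2)); last by move=> f _; exact: IH.
rewrite (sum_sig (fun p => darc p.1 p.2) (fun p => (val e).2 == p.1) (fun p => out k p.2)).
rewrite (eq_bigl (fun p => predT p.1 && ((p.1 == (val e).2) && darc p.1 p.2))); last first.
  by move=> p /=; rewrite andbC eq_sym.
rewrite -(pair_big_dep predT (fun u w => (u == (val e).2) && darc u w) (fun u w => out k w)) /=.
rewrite [LHS](bigD1 (val e).2) //= [X in _ + X]big1 ?addn0; last first.
  by move=> u /negbTE Hu; rewrite big_pred0 // => w; rewrite Hu.
by apply: eq_bigl => w; rewrite eqxx.
Qed.

Lemma card_iter k G : #|dvert (iter_line k G)| = \sum_(v : dvert G) out k v.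
Proof.
elim: k G => [|k IH] G; first by rewrite sum1_card.
rewrite /iter_line iterSr -/(iter_line k (line_digraph G)) IH.
rewrite (eq_bigr (fun f : line_vert G => out k (val f).2)); last by move=> f _; exact: out_line.
rewrite (sum_sig (fun p => darc p.1 p.2) predT (fun p => out k p.2)).
rewrite (eq_bigl (fun p => predT p.1 && darc p.1 p.2)); last by move=> p; rewrite andbT.
by rewrite -(pair_big_dep predT (fun u w => darc u w) (fun u w => out k w)).
Qed.

Lemma hc_cat d (a : 'I_d.+1) s t : hc a (s ++ t) -> hc a s.
Proof.
case: s => [|b [|c [|e s]]] //=; first by case/andP=> ->.
by case/andP=> ->.
Qed.

Lemma sf_catl d (s t : seq 'I_d.+1) : sf_word (s ++ t) -> sf_word s.
Proof.
elim: s => [|a s IH]; first by [].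
rewrite /= !sf_cons => /andP[/hc_cat -> /IH ->] //.
Qed.

Definition H d k (s : seq 'I_d.+1) := \sum_(t : k.-tuple 'I_d.+1) (sf_word (s ++ t) : nat).

Lemma H_nsf d k (s : seq 'I_d.+1) : ~~ sf_word s -> H k s = 0.
Proof.
move=> ns; rewrite /H big1 // => t _.
by case E: (sf_word (s ++ t)) => //; move: ns; rewrite (sf_catl E).
Qed.

Lemma tnth4 (T : Type) (x0 : T) (t : 4.-tuple T) i : i < 4 -> tnth t (inord i) = nth x0 t i.
Proof. by move=> Hi; rewrite (tnth_nth x0) inordK. Qed.

Definition Qp d (a1 a2 a3 : 'I_d.+1) (s : seq 'I_d.+1) :=
  [&& nth ord0 s 0 == a1, nth ord0 s 1 == a2 & nth ord0 s 2 == a3].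

Lemma arc_eq d (v w : SF_vert d) :
  SF_arc v w = Qp (nth ord0 (val v) 1) (nth ord0 (val v) 2) (nth ord0 (val v) 3) (val w).
Proof.
rewrite /SF_arc !(tnth4 ord0) // (tnth_nth ord0).
case: v => [[[|v0 [|v1 [|v2 [|v3 [|]]]]] //= Hv] Sv].
case: w => [[[|w0 [|w1 [|w2 [|w3 [|]]]]] //= Hw] Sw].
move: Sw; rewrite /sf_word /= /Qp /= !andbT.
case: (w0 =P v1) => [->|] //=; case: (w1 =P v2) => [->|] //=; case: (w2 =P v3) => [->|] //=.
rewrite ![w3 == _]eq_sym.
by case: (v1 == v3); case: (v2 == w3); case: (v3 == w3); rewrite /= ?andbF.
Qed.

Lemma sum_only (T : finType) (a : T) (F : T -> nat) :
  (forall y, y != a -> F y = 0) -> \sum_y F y = F a.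
Proof. by move=> H0; rewrite (bigD1 a) //= big1 ?addn0 // => y /H0. Qed.

Lemma sum_tuple4 (T : finType) (f : seq T -> nat) :
  \sum_(t : 4.-tuple T) f t = \sum_y0 \sum_y1 \sum_y2 \sum_y3 f [:: y0; y1; y2; y3].
Proof.
rewrite sum_tupleS; apply: eq_bigr => y0 _.
rewrite (@sum_tupleS _ _ (fun s => f (y0 :: s))); apply: eq_bigr => y1 _.
rewrite (@sum_tupleS _ _ (fun s => f (y0 :: y1 :: s))); apply: eq_bigr => y2 _.
rewrite (@sum_tupleS _ _ (fun s => f (y0 :: y1 :: y2 :: s))); apply: eq_bigr => y3 _.
by rewrite (sum_tuple0 (fun s => f (y0 :: y1 :: y2 :: y3 :: s))).
Qed.

Lemma out_SF d k (v : SF_vert d) : @out (SF d) k v = H k (val v).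
Proof.
elim: k v => [|k IH] v.
  by rewrite /= /H (sum_tuple0 (fun s => (sf_word (val v ++ s) : nat))) cats0 (valP v).
rewrite /=.
rewrite (eq_bigr (fun w : SF_vert d => H k (val w))); last by move=> w _; exact: IH.
rewrite (eq_bigl (fun w : SF_vert d => Qp (nth ord0 (val v) 1) (nth ord0 (val v) 2) (nth ord0 (val v) 3) (val w))); last by move=> w; exact: arc_eq.
rewrite (sum_sig (fun s : 4.-tuple 'I_d.+1 => sf_word s) (fun s => Qp (nth ord0 (val v) 1) (nth ord0 (val v) 2) (nth ord0 (val v) 3) s) (fun s => H k s)).
rewrite big_mkcond /=.
rewrite (eq_bigr (fun s : 4.-tuple 'I_d.+1 => if Qp (nth ord0 (val v) 1) (nth ord0 (val v) 2) (nth ord0 (val v) 3) s then H k s else 0)); last first.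
  move=> s _; case E: (sf_word s) => //=; case: ifP => // _; by rewrite H_nsf ?E.
rewrite (sum_tuple4 (fun s => if Qp (nth ord0 (val v) 1) (nth ord0 (val v) 2) (nth ord0 (val v) 3) s then H k s else 0)).
rewrite /H (@sum_tupleS _ _ (fun s => (sf_word (val v ++ s) : nat))).
case: v => [[[|a0 [|a1 [|a2 [|a3 [|]]]]] //= Hv] Sv] /=.
rewrite (@sum_only _ a1); last first.
  move=> y0 /negbTE n0; rewrite big1 // => y1 _; rewrite big1 // => y2 _; rewrite big1 // => y3 _.
  by rewrite /Qp /= n0.
rewrite (@sum_only _ a2); last first.
  move=> y1 /negbTE n1; rewrite big1 // => y2 _; rewrite big1 // => y3 _.
  by rewrite /Qp /= n1 andbF.
rewrite (@sum_only _ a3); last first.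
  move=> y2 /negbTE n2; rewrite big1 // => y3 _.
  by rewrite /Qp /= n2 !andbF.
apply: eq_bigr => x _; rewrite /Qp /= !eqxx /=.
apply: eq_bigr => t _; rewrite [in RHS]sf_cons.
move: Sv; rewrite /sf_word /= !andbT.
by case/andP => /and3P[-> _ _] ->.
Qed.

Lemma sum_tuple_cat (T : finType) n m (f : seq T -> nat) :
  \sum_(t : (n + m).-tuple T) f t = \sum_(s : n.-tuple T) \sum_(t : m.-tuple T) f (s ++ t).
Proof.
elim: n f => [|n IH] f.
  by rewrite (@sum_tuple0 _ (fun s => \sum_(t : m.-tuple T) f (s ++ t))).
rewrite (@sum_tupleS _ (n + m) f) (@sum_tupleS _ n (fun s => \sum_(t : m.-tuple T) f (s ++ t))).
apply: eq_bigr => x _; exact: (IH (fun s => f (x :: s))).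
Qed.

Lemma nk_nwords d k : nk d k = nwords d (k + 4).
Proof.
rewrite /nk card_iter (eq_bigr (fun v : SF_vert d => H k (val v))); last by move=> v _; exact: out_SF.
rewrite (sum_sig (fun s : 4.-tuple 'I_d.+1 => sf_word s) predT (fun s => H k s)).
rewrite big_mkcond /=.
rewrite (eq_bigr (fun s : 4.-tuple 'I_d.+1 => H k s)); last first.
  by move=> s _; rewrite andbT; case E: (sf_word s) => //; rewrite H_nsf ?E.
rewrite /nwords addnC cardsE -sum_b2n.
by rewrite (@sum_tuple_cat _ 4 k (fun s => (sf_word s : nat))).
Qed.

Definition E d m (a b c : 'I_d.+1) :=
  \sum_(t : m.-tuple 'I_d.+1) (sf_word [:: a, b, c & t] : nat).
Definition Tw d m := \sum_(a : 'I_d.+1) \sum_(b : 'I_d.+1) \sum_(c : 'I_d.+1) E m a b c.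
Definition SA d m := \sum_(a : 'I_d.+1) \sum_(b : 'I_d.+1) \sum_(c : 'I_d.+1) (a == c) * E m a b c.
Definition SB d m := \sum_(a : 'I_d.+1) \sum_(b : 'I_d.+1) \sum_(c : 'I_d.+1) (a != c) * E m a b c.

Lemma nwords3 d m : nwords d (m + 3) = Tw d m.
Proof.
rewrite /nwords addnC cardsE -sum_b2n.
rewrite (@sum_tupleS _ (2 + m) (fun s => (sf_word s : nat))); apply: eq_bigr => a _.
rewrite (@sum_tupleS _ (1 + m) (fun s => (sf_word (a :: s) : nat))); apply: eq_bigr => b _.
by rewrite (@sum_tupleS _ m (fun s => (sf_word (a :: b :: s) : nat))).
Qed.

Lemma Tw_split d m : Tw d m = SA d m + SB d m.
Proof.
rewrite /Tw /SA /SB -big_split; apply: eq_bigr => a _.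
rewrite -big_split; apply: eq_bigr => b _.
rewrite -big_split; apply: eq_bigr => c _.
by case: (a == c); rewrite /= ?mul1n ?mul0n ?addn0.
Qed.

Lemma E_S d m (a b c : 'I_d.+1) :
  E m.+1 a b c = \sum_x ((a != b) && ~~((a == c) && (b == x))) * E m b c x.
Proof.
rewrite /E (@sum_tupleS _ m (fun s => (sf_word [:: a, b, c & s] : nat))).
apply: eq_bigr => x _; rewrite big_distrr; apply: eq_bigr => t _.
rewrite sf_cons /=.
by case: ((a != b) && ~~ ((a == c) && (b == x))); rewrite ?mul1n ?mul0n.
Qed.

Lemma E_bb d m (a c : 'I_d.+1) : E m a a c = 0.
Proof.
rewrite /E big1 // => t _.
by rewrite sf_cons /= eqxx.
Qed.

Lemma sum_neq d (b : 'I_d.+1) : \sum_(a : 'I_d.+1) (a != b : nat) = d.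
Proof.
rewrite (sum_b2n (fun a => a != b)).
transitivity #|predC1 b|; first by apply: eq_card.
by rewrite cardC1 card_ord.
Qed.

Lemma sum_neq2 d (b c : 'I_d.+1) : b != c ->
  \sum_(a : 'I_d.+1) ((a != c) && (a != b) : nat) = d.-1.
Proof.
move=> bc; rewrite (sum_b2n (fun a => (a != c) && (a != b))).
transitivity #|~: [set b; c]|.
  by apply: eq_card => a; rewrite !inE /= negb_or andbC.
have := cardsC [set b; c]; rewrite cards2 bc card_ord.
move: (#|~: _|) => n; lia.
Qed.

Lemma L_A d m (b c : 'I_d.+1) :
  \sum_(a : 'I_d.+1) (a == c) * E m.+1 a b c = \sum_(x : 'I_d.+1) (b != x) * E m b c x.
Proof.
rewrite (@sum_only _ c (fun a => (a == c) * E m.+1 a b c)); last first.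
  by move=> a /negbTE ->; rewrite mul0n.
rewrite eqxx mul1n E_S; apply: eq_bigr => x _.
case: (b =P c) => [->|/eqP bc]; first by rewrite E_bb // !muln0.
by rewrite eq_sym bc eqxx.
Qed.

Lemma L_B d m (b c : 'I_d.+1) :
  \sum_(a : 'I_d.+1) (a != c) * E m.+1 a b c = d.-1 * \sum_(x : 'I_d.+1) E m b c x.
Proof.
under eq_bigr => a _ do rewrite E_S big_distrr.
rewrite exchange_big big_distrr; apply: eq_bigr => x _ /=.
case: (b =P c) => [->|/eqP bc].
  by rewrite E_bb muln0; apply: big1 => a _; rewrite !muln0.
rewrite (eq_bigr (fun a => ((a != c) && (a != b)) * E m b c x)); last first.
  by move=> a _; case: (a == c); case: (a != b); rewrite /= ?mul0n ?mul1n.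
by rewrite -big_distrl sum_neq2.
Qed.

Lemma SA_S d m : SA d m.+1 = SB d m.
Proof.
rewrite /SA exchange_big; apply: eq_bigr => b _.
rewrite exchange_big; apply: eq_bigr => c _.
exact: L_A.
Qed.

Lemma SB_S d m : SB d m.+1 = d.-1 * Tw d m.
Proof.
rewrite /SB /Tw exchange_big big_distrr; apply: eq_bigr => b _.
rewrite exchange_big big_distrr; apply: eq_bigr => c _.
exact: L_B.
Qed.

Lemma Tw_rec d m : Tw d m.+2 = d.-1 * Tw d m + d.-1 * Tw d m.+1.
Proof. by rewrite Tw_split SA_S SB_S SB_S. Qed.

Lemma E0 d (a b c : 'I_d.+1) : E 0 a b c = (a != b) && (b != c).
Proof.
rewrite /E (@sum_tuple0 _ (fun s => (sf_word [:: a, b, c & s] : nat))).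
by rewrite /sf_word /= !andbT.
Qed.

Lemma Tw0 d : Tw d 0 = d.+1 * (d * d).
Proof.
rewrite /Tw (eq_bigr (fun _ => d * d)) ?sum_nat_const ?card_ord // => a _.
rewrite (eq_bigr (fun b => (a != b) * d)); last first.
  move=> b _; under eq_bigr => c _ do rewrite E0.
  case: (a != b) => /=; last by rewrite big1.
  rewrite mul1n; transitivity (\sum_(c : 'I_d.+1) (c != b : nat)); last exact: sum_neq.
  by apply: eq_bigr => c _; rewrite eq_sym.
rewrite -big_distrl; congr (_ * _).
transitivity (\sum_(c : 'I_d.+1) (c != a : nat)); last exact: sum_neq.
by apply: eq_bigr => c _; rewrite eq_sym.
Qed.

Lemma SB0 d : SB d 0 = d.+1 * (d * d.-1).
Proof.
rewrite /SB (eq_bigr (fun _ => d * d.-1)) ?sum_nat_const ?card_ord // => a _.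
rewrite (eq_bigr (fun b => (a != b) * d.-1)); last first.
  move=> b _; under eq_bigr => c _ do rewrite E0.
  case ab: (a != b) => /=; last by rewrite big1 // => c _; rewrite muln0.
  rewrite mul1n -(@sum_neq2 _ b a); last by rewrite eq_sym.
  by apply: eq_bigr => c _; rewrite ![c == _]eq_sym; case: (a != c); case: (b != c).
rewrite -big_distrl; congr (_ * _).
transitivity (\sum_(c : 'I_d.+1) (c != a : nat)); last exact: sum_neq.
by apply: eq_bigr => c _; rewrite eq_sym.
Qed.

From mathcomp Require Import ring.
Import GRing.Theory Num.Theory.
Local Open Scope ring_scope.

Theorem mainTheorem11 (d : nat) (hd : (2 <= d)%N) :
  (forall k : nat, nk d k = nwords d (k + 4)) /\
  (nk d 0)%:Z = (d%:Z) ^+ 4 + (d%:Z) ^+ 3 - (d%:Z) ^+ 2 - d%:Z /\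
  (nk d 1)%:Z = (d%:Z) ^+ 5 + (d%:Z) ^+ 4 - 2 * (d%:Z) ^+ 3 - (d%:Z) ^+ 2 + d%:Z /\
  (forall k : nat, (2 <= k)%N ->
     (nk d k)%:Z = (d%:Z - 1) * (nk d k.-1)%:Z + (d%:Z - 1) * (nk d k.-2)%:Z).
Proof.
have hd0 : (0 < d)%N by apply: leq_trans hd.
have nkT : forall k, nk d k = Tw d k.+1.
  by move=> k; rewrite nk_nwords -nwords3 addSn addnS.
have T1 : Tw d 1 = (SB d 0 + d.-1 * Tw d 0)%N by rewrite Tw_split SA_S SB_S.
have T2 : Tw d 2 = (d.-1 * Tw d 0 + d.-1 * Tw d 1)%N := Tw_rec d 0.
split; first exact: nk_nwords.
split.
  rewrite nkT T1 SB0 Tw0 !(PoszD, PoszM) !(predn_int hd0) !intS; ring.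
split.
  rewrite nkT T2 T1 SB0 Tw0 !(PoszD, PoszM) !(predn_int hd0) !intS; ring.
case=> [|[|k]] // _ /=.
rewrite !nkT Tw_rec !(PoszD, PoszM) !(predn_int hd0); ring.
Qed.
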